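(* Let $n\ge1$ and $\gamma\in PSL(n+1,\mathbb{C})$. Then $\gamma$ is elliptic if and only if there exists $h\in PSL(n+1,\mathbb{C})$ such that $h^{-1}\gamma h(T(r))=T(r)$ for every $r>0$, where $T(r)=\{[z_1:\dots:z_{n+1}]\in\mathbb{P}^n_{\mathbb{C}}:\ \sum_{j=1}^n|z_j|^2=r|z_{n+1}|^2\}$ (these $T(r)$, $r>0$, form a foliation of $\mathbb{C}^n\setminus\{0\}=\mathbb{P}^n_{\mathbb{C}}\setminus(\{z_{n+1}=0\}\cup\{[e_{n+1}]\})$ by concentric spheres).
   Context: $\gamma\in PSL(n+1,\mathbb{C})=GL(n+1,\mathbb{C})/\mathbb{C}^*$ is called elliptic if every lift $\widetilde\gamma\in SL(n+1,\mathbb{C})$ of $\gamma$ is diagonalizable and all its eigenvalues have modulus $1$. *)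

(* Defs.v *)
From HB Require Import structures.
From mathcomp Require Import all_boot all_order all_algebra.
From mathcomp Require Import reals.
From mathcomp.real_closed Require Import complex.
Set Implicit Arguments. Unset Strict Implicit. Unset Printing Implicit Defensive.
Import Order.TTheory GRing.Theory Num.Theory.
Local Open Scope ring_scope.

(* An element of PSL(n+1,C) = GL(n+1,C)/C^* is represented by any
   invertible (n+1)x(n+1) complex matrix (a lift).  Points of P^n are
   represented by nonzero column vectors; [z] = [w] iff w = c z, c <> 0. *)

Section Defs.
Variable R : realType.
Local Notation C := (R[i])%C.

(* gamma (represented by g) is elliptic: every lift of gamma to SL(n+1,C),
   i.e. every scalar multiple c *: g with determinant 1, is diagonalizable
   and all its eigenvalues have modulus 1. *)
Definition elliptic (m : nat) (g : 'M[C]_m) : Prop :=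
  forall c : C, \det (c *: g) = 1 ->
    diagonalizable (c *: g) /\
    (forall l : C, eigenvalue (c *: g) l -> `|l| = 1).

Definition inT (n : nat) (r : C) (z : 'cV[C]_n.+1) : Prop :=
  z != 0 /\
  \sum_(j < n) `|z (widen_ord (leqnSn n) j) 0| ^+ 2 = r * `|z ord_max 0| ^+ 2.

Definition in_image_T (n : nat) (M : 'M[C]_n.+1) (r : C) (w : 'cV[C]_n.+1) : Prop :=
  w != 0 /\ exists z, inT r z /\ exists c : C, c != 0 /\ w = c *: (M *m z).

Definition preserves_T (n : nat) (M : 'M[C]_n.+1) (r : C) : Prop :=
  forall w : 'cV[C]_n.+1, in_image_T M r w <-> inT r w.
End Defs.

(* Main.v *)
Require Import Defs.
From HB Require Import structures.
From mathcomp Require Import all_boot all_order all_algebra.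
From mathcomp Require Import reals.
From mathcomp.real_closed Require Import complex.
From mathcomp Require Import spectral sesquilinear.
From mathcomp Require Import ring.
Import Order.TTheory GRing.Theory Num.Theory.
Local Open Scope ring_scope.
Set Warnings "-notation-overridden,-ambiguous-paths".

Section Aux.
Variable R : realType.
Local Notation C := (R[i])%C.

Lemma scale_diag_entry n (e : C) (D : 'rV[C]_n.+1) (z : 'cV[C]_n.+1) i :
  ((e *: diag_mx D) *m z) i 0 = e * D 0 i * z i 0.
Proof. by rewrite -scalemxAl mul_diag_mx !mxE mulrA. Qed.

Lemma normM2 (x y : C) : `|x * y| ^+ 2 = `|x| ^+ 2 * `|y| ^+ 2.
Proof. by rewrite normrM exprMn. Qed.

Lemma diag_preserves n (e : C) (D : 'rV[C]_n.+1) r :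
  e != 0 -> (forall i, `|D 0 i| = 1) -> preserves_T (e *: diag_mx D) r.
Proof.
move=> e0 HD w; have D0 i : D 0 i != 0.
  by rewrite -normr_eq0 HD oner_eq0.
split.
- move=> [w0 [z [[z0 Hz] [c [c0 Hw]]]]]; subst w; split => //.
  have E i : `|(c *: (e *: diag_mx D *m z)) i 0| ^+ 2 = `|c * e| ^+ 2 * `|z i 0| ^+ 2.
    by rewrite mxE scale_diag_entry !normM2 HD expr1n mulr1 mulrA.
  under eq_bigr do rewrite E.
  by rewrite -mulr_sumr Hz E mulrCA.
- move=> [w0 Hw]; split => //.
  exists (\col_i (w i 0 / D 0 i)); split.
    split.
      apply: contra_neq w0 => H; apply/matrixP => i j; rewrite ord1.
      have := congr1 (fun M : 'cV[C]_n.+1 => M i 0) H; rewrite !mxE => /eqP.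
      by rewrite mulf_eq0 invr_eq0 (negbTE (D0 i)) orbF => /eqP.
    have E i : `|(\col_i (w i 0 / D 0 i)) i 0| = `|w i 0|.
      by rewrite mxE normrM normrV ?unitfE // HD invr1 mulr1.
    under eq_bigr do rewrite E.
    by rewrite Hw E.
  exists e^-1; split; first by rewrite invr_eq0.
  apply/matrixP => i j; rewrite ord1 mxE scale_diag_entry mxE.
  by field; rewrite e0 D0.
Qed.

Lemma delta_neq0 n (i : 'I_n) : (delta_mx 0 i : 'rV[C]_n) != 0.
Proof.
apply/eqP => /matrixP /(_ 0 i); rewrite !mxE !eqxx /= => /eqP.
by rewrite oner_eq0.
Qed.

Lemma dir1 n (g : 'M[C]_n.+1) : g \in unitmx -> elliptic g ->
  exists h : 'M[C]_n.+1, h \in unitmx /\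
    forall r : C, 0 < r -> preserves_T (invmx h *m g *m h) r.
Proof.
move=> gu Hell.
have dg : \det g != 0 by rewrite -unitfE -unitmxE.
pose c := (n.+1).-root (\det g)^-1.
have Hc : c ^+ n.+1 = (\det g)^-1 by rewrite rootCK.
have Hdet : \det (c *: g) = 1 by rewrite detZ Hc mulVf.
have c0 : c != 0.
  by apply: contra_eq_neq Hdet => ->; rewrite scale0r det0 eq_sym oner_neq0.
have [[P Pu HPd] Heig] := Hell c Hdet.
have [D HD] := diagonalizable_forLR Pu HPd; rewrite mxpoly.conjVmx // in HD.
exists (invmx P); split; first by rewrite unitmx_inv.
move=> r _; rewrite invmxK.
have Hg : g = c^-1 *: (invmx P *m diag_mx D *m P) by rewrite -HD scalerA mulVf // scale1r.
have -> : P *m g *m invmx P = c^-1 *: diag_mx D.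
  by rewrite Hg -scalemxAr -scalemxAl !mulmxA mulmxV // mul1mx mulmxK.
apply: diag_preserves; first by rewrite invr_eq0.
move=> i; apply: Heig; apply/eigenvalueP.
exists (delta_mx 0 i *m P).
  by rewrite HD !mulmxA mulmxK // -(rowE i (diag_mx D)) row_diag_mx scalemxAl.
by rewrite mulmx_free_eq0 ?row_free_unit // delta_neq0.
Qed.
Local Notation w := (widen_ord (leqnSn _)).

Lemma w_neq_max n (j : 'I_n) : (w j == ord_max :> 'I_n.+1) = false.
Proof. by apply/negbTE; rewrite -val_eqE /= neq_ltn ltn_ord. Qed.

Lemma w_eq n (j k : 'I_n) : (w j == w k :> 'I_n.+1) = (j == k).
Proof. by rewrite -val_eqE /= val_eqE. Qed.

Lemma fwd n (M : 'M[C]_n.+1) r z : M \in unitmx -> preserves_T M r ->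
  inT r z -> inT r (M *m z).
Proof.
move=> Mu Hp Hz; apply/(Hp (M *m z)).
have [z0 _] := Hz.
split; last by exists z; split => //; exists 1; rewrite oner_neq0 scale1r.
apply: contra_neq z0 => H.
by rewrite -[z]mul1mx -(mulVmx Mu) -mulmxA H mulmx0.
Qed.

Lemma master n (M : 'M[C]_n.+1) (k l : 'I_n) (a b : C) :
  M \in unitmx -> (forall r, 0 < r -> preserves_T M r) -> a != 0 ->
  (k != l) || (b == 0) ->
  \sum_(j < n) `|a * M (w j) (w k) + b * M (w j) (w l) + M (w j) ord_max| ^+ 2
  = (`|a| ^+ 2 + `|b| ^+ 2) *
    `|a * M ord_max (w k) + b * M ord_max (w l) + M ord_max ord_max| ^+ 2.
Proof.
move=> Mu Hp a0 Hkl.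
pose y : 'cV[C]_n.+1 := a *: delta_mx (w k) 0 + b *: delta_mx (w l) 0 + delta_mx ord_max 0.
have ye i : y i 0 = a * (i == w k)%:R + b * (i == w l)%:R + (i == ord_max)%:R.
  by rewrite !mxE !eqxx !andbT.
have Hr : 0 < `|a| ^+ 2 + `|b| ^+ 2.
  by apply: ltr_pwDl; [apply: exprn_gt0; rewrite normr_gt0 | exact: exprn_ge0].
have Hy : inT (`|a| ^+ 2 + `|b| ^+ 2) y.
  split.
    apply/eqP => /matrixP /(_ ord_max 0); rewrite ye !mxE eqxx.
    rewrite eq_sym w_neq_max eq_sym w_neq_max !mulr0 !add0r => /eqP.
    by rewrite oner_eq0.
  rewrite ye eqxx eq_sym w_neq_max eq_sym w_neq_max !mulr0 !add0r normr1 expr1n mulr1.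
  have E j : `|y (w j) 0| ^+ 2 = (if j == k then `|a| ^+ 2 else 0) + (if j == l then `|b| ^+ 2 else 0).
    rewrite ye !w_eq w_neq_max addr0.
    have S := (mulr1n, mulr0n, mulr1, mulr0, addr0, add0r, normr0, expr0n).
    case: (j =P k) => [jk|jk]; case: (j =P l) => [jl|jl] /=; rewrite ?S //.
    have bz : b = 0 by move: Hkl; rewrite -jk -jl eqxx /= => /eqP.
    by rewrite bz ?S.
  under eq_bigr do rewrite E.
  by rewrite big_split /= -!big_mkcond /= !big_pred1_eq.
have := @fwd _ M _ y Mu (Hp _ Hr) Hy.
have Me i : (M *m y) i 0 = a * M i (w k) + b * M i (w l) + M i ord_max.
  by rewrite !mulmxDr -!scalemxAr -!colE !mxE.
move=> [_]; under eq_bigr do rewrite Me.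
by rewrite Me.
Qed.

Lemma poly4 (F : numFieldType) (p4 p3 p2 p1 p0 : F) :
  (forall t : nat, (0 < t)%N ->
     p4 * t%:R ^+ 4 + p3 * t%:R ^+ 3 + p2 * t%:R ^+ 2 + p1 * t%:R + p0 = 0) ->
  p4 = 0 /\ p0 = 0.
Proof.
move=> H.
pose P (t : F) := p4 * t ^+ 4 + p3 * t ^+ 3 + p2 * t ^+ 2 + p1 * t + p0.
have hP t : (0 < t)%N -> P t%:R = 0 by move=> /H.
have e4 : 24%:R * p4 = P 5%:R - 4%:R * P 4%:R + 6%:R * P 3%:R - 4%:R * P 2%:R + P 1%:R.
  by rewrite /P; ring.
have e0 : p0 = 5%:R * P 1%:R - 10%:R * P 2%:R + 10%:R * P 3%:R - 5%:R * P 4%:R + P 5%:R.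
  by rewrite /P; ring.
rewrite !hP // !mulr0 !subr0 !addr0 in e4 e0.
split => //; move/eqP: e4; rewrite mulf_eq0 pnatr_eq0 /= => /eqP //.
Qed.

Lemma expand1 (x p q : C) : x^* = x ->
  `|x * p + q| ^+ 2 = x ^+ 2 * `|p| ^+ 2 + x * (p * q^* + p^* * q) + `|q| ^+ 2.
Proof. move=> hx; rewrite !normCK rmorphD rmorphM /= hx; ring. Qed.

Lemma expand2 (s p q : C) :
  `|p + s * q| ^+ 2 = `|p| ^+ 2 + `|s| ^+ 2 * `|q| ^+ 2 + s^* * (p * q^*) + s * (p^* * q).
Proof. by rewrite !normCK rmorphD rmorphM /=; ring. Qed.

Lemma bc0 n (M : 'M[C]_n.+1) (k : 'I_n) :
  M \in unitmx -> (forall r, 0 < r -> preserves_T M r) ->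
  M ord_max (w k) = 0 /\ \sum_(j < n) `|M (w j) ord_max| ^+ 2 = 0.
Proof.
move=> Mu Hp.
pose SA := \sum_(j < n) `|M (w j) (w k)| ^+ 2.
pose SB := \sum_(j < n) (M (w j) (w k) * (M (w j) ord_max)^* + (M (w j) (w k))^* * M (w j) ord_max).
pose SZ := \sum_(j < n) `|M (w j) ord_max| ^+ 2.
pose c := M ord_max (w k); pose d := M ord_max ord_max.
have [] := @poly4 _ (- `|c| ^+ 2) (- (c * d^* + c^* * d)) (SA - `|d| ^+ 2) SB SZ.
  move=> t t0; have := @master n M k k t%:R 0 Mu Hp.
  rewrite pnatr_eq0 -lt0n t0 !eqxx /= => /(_ isT isT).
  have hx : (t%:R : C)^* = t%:R by rewrite rmorph_nat.
  under eq_bigr do rewrite mul0r addr0 expand1 //.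
  rewrite mul0r addr0 expand1 // normr0 expr0n /= addr0 normr_nat.
  rewrite !big_split /= -!mulr_sumr -/SA -/SB -/SZ => /eqP; rewrite -subr_eq0 => /eqP E.
  rewrite -[RHS]E /c /d; ring.
move=> /eqP; rewrite oppr_eq0 sqrf_eq0 normr_eq0 => /eqP H1 H2; split => //.
Qed.

Lemma bc0' n (M : 'M[C]_n.+1) :
  M \in unitmx -> (forall r, 0 < r -> preserves_T M r) ->
  (forall k : 'I_n, M ord_max (w k) = 0) /\ (forall j : 'I_n, M (w j) ord_max = 0).
Proof.
move=> Mu Hp; split => [k|j]; first by have [] := @bc0 _ M k Mu Hp.
have [_ /psumr_eq0P H] := @bc0 _ M j Mu Hp.
by apply/eqP; rewrite -normr_eq0 -(sqrf_eq0) H // => i _; apply: exprn_ge0.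
Qed.

Lemma gram n (M : 'M[C]_n.+1) :
  M \in unitmx -> (forall r, 0 < r -> preserves_T M r) ->
  forall k l : 'I_n, \sum_(j < n) (M (w j) (w k))^* * M (w j) (w l)
    = (k == l)%:R * ((M ord_max ord_max)^* * M ord_max ord_max).
Proof.
move=> Mu Hp; have [Hc Hb] := @bc0' _ M Mu Hp.
set d := M ord_max ord_max.
have Hd k : \sum_(j < n) `|M (w j) (w k)| ^+ 2 = `|d| ^+ 2.
  have := @master n M k k 1 0 Mu Hp; rewrite oner_neq0 !eqxx orbT => /(_ isT isT).
  under eq_bigr do rewrite Hb mul1r mul0r !addr0.
  by rewrite Hc mul1r mul0r !addr0 add0r normr1 normr0 expr1n expr0n /= addr0 mul1r.
move=> k l; case: (eqVneq k l) => [<-|kl].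
  rewrite mul1r -normCKC -(Hd k); apply: eq_bigr => j _; by rewrite normCKC.
rewrite mul0r.
set X := \sum_(j < n) (M (w j) (w k))^* * M (w j) (w l).
have HX s : s^* * X^* + s * X = 0.
  have := @master n M k l 1 s Mu Hp; rewrite oner_neq0 kl => /(_ isT isT).
  under eq_bigr do rewrite Hb mul1r addr0 expand2.
  rewrite !Hc mul1r mulr0 !add0r normr1 expr1n.
  rewrite !big_split /= -!mulr_sumr !Hd -/X.
  have -> : \sum_(j < n) M (w j) (w k) * (M (w j) (w l))^* = X^*.
    rewrite rmorph_sum; apply: eq_bigr => j _; by rewrite rmorphM /= conjCK mulrC.
  move=> /eqP; rewrite -subr_eq0 => /eqP E; rewrite -[RHS]E; ring.
have h1 := HX 1; have hi := HX 'i.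
have e : 2%:R * 'i * X = 'i * (1^* * X^* + 1 * X) + ('i^* * X^* + 'i * X).
  by rewrite conjCi conjC1; ring.
rewrite h1 hi mulr0 addr0 in e.
by move/eqP: e; rewrite !mulf_eq0 pnatr_eq0 (negbTE (neq0Ci _)) /= => /eqP.
Qed.

Local Open Scope sesquilinear_scope.

Lemma ord_split {n} (i : 'I_n.+1) : i = ord_max \/ exists j : 'I_n, i = w j.
Proof.
case: (unliftP ord_max i) => [j ->|->]; last by left.
by right; exists j; apply: val_inj; rewrite /= /bump leqNgt ltn_ord.
Qed.

Lemma MtM n (M : 'M[C]_n.+1) :
  M \in unitmx -> (forall r, 0 < r -> preserves_T M r) ->
  M^t* *m M = ((M ord_max ord_max)^* * M ord_max ord_max)%:M.
Proof.
move=> Mu Hp; have [Hc Hb] := @bc0' _ M Mu Hp; have G := @gram _ M Mu Hp.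
apply/matrixP => i j; rewrite !mxE big_ord_recr /=.
under eq_bigr do rewrite !mxE.
rewrite !mxE.
have [->|[k ->]] := ord_split i; have [->|[l ->]] := ord_split j.
- under eq_bigr do rewrite Hb conjC0 mul0r.
  by rewrite big1_eq add0r eqxx mulr1n.
- under eq_bigr do rewrite Hb conjC0 mul0r.
  by rewrite big1_eq add0r Hc mulr0 eq_sym w_neq_max mulr0n.
- under eq_bigr do rewrite Hb mulr0.
  by rewrite big1_eq add0r Hc conjC0 mul0r w_neq_max mulr0n.
- rewrite G Hc conjC0 mul0r addr0 w_eq.
  by case: (k == l); rewrite ?mul1r ?mulr1n ?mul0r ?mulr0n.
Qed.

Lemma tcZ m n (a : C) (A : 'M[C]_(m, n)) : (a *: A)^t* = a^* *: A^t*.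
Proof. by apply/matrixP => i j; rewrite !mxE rmorphM. Qed.

Lemma tcM m n p (A : 'M[C]_(m, n)) (B : 'M[C]_(n, p)) : (A *m B)^t* = B^t* *m A^t*.
Proof. by rewrite trmx_mul map_mxM. Qed.

Lemma tcZZ m n (a : C) (x : 'M[C]_(m, n)) : (a *: x) *m (a *: x)^t* = (a * a^*) *: (x *m x^t*).
Proof. by rewrite tcZ -scalemxAl -scalemxAr scalerA. Qed.

Lemma dir2 n (g : 'M[C]_n.+1) : g \in unitmx ->
  (exists h : 'M[C]_n.+1, h \in unitmx /\
    forall r : C, 0 < r -> preserves_T (invmx h *m g *m h) r) -> elliptic g.
Proof.
move=> gu [h [hu Hp]] c Hdet.
have Mu : invmx h *m g *m h \in unitmx by rewrite !unitmx_mul unitmx_inv hu gu.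
have G := @MtM _ _ Mu Hp.
move: Mu Hp G; set M := invmx h *m g *m h => Mu Hp G.
set d := M ord_max ord_max in G.
have dh : \det h != 0 by rewrite -unitfE -unitmxE.
pose U := c *: M.
have HU : U = invmx h *m (c *: g) *m h by rewrite /U /M -scalemxAr -scalemxAl.
have cgE : c *: g = h *m U *m invmx h by rewrite HU !mulmxA mulmxV // mul1mx mulmxK.
have detU : \det U = 1.
  by rewrite HU !det_mulmx Hdet det_inv mulr1 mulVf.
have UtU0 : U^t* *m U = (`|c * d| ^+ 2)%:M.
  rewrite /U tcZ -scalemxAl -scalemxAr G scalerA.
  apply/matrixP => i j; rewrite !mxE normCKC rmorphM /=; ring.
have k1 : `|c * d| ^+ 2 = 1.
  have : \det (U^t* *m U) = 1.
    rewrite det_mulmx det_map_mx det_tr detU /=; rewrite conjC1 mulr1 //.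
  rewrite UtU0 det_scalar => /eqP; rewrite pexpr_eq1 // => [/eqP //|].
  exact: exprn_ge0.
rewrite k1 in UtU0.
have UUt : U *m U^t* = 1%:M by apply: mulmx1C.
have nU : U \is normalmx by apply/normalmxP; rewrite UUt UtU0.
have [P [sp [Pu HS]]] : exists P (sp : 'rV_n.+1), P \in unitmx /\ U = invmx P *m diag_mx sp *m P.
  exists (spectralmx U), (spectral_diag U); split; first exact: spectral_unit.
  exact/orthomx_spectralP.
split.
  have Qu : P *m invmx h \in unitmx by rewrite unitmx_mul Pu unitmx_inv hu.
  exists (P *m invmx h) => //.
  apply/(diagonalizable_forLR Qu); exists sp; rewrite mxpoly.conjVmx //.
  have iQ : invmx (P *m invmx h) = h *m invmx P.
    have QX : (P *m invmx h) *m (h *m invmx P) = 1%:M.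
      by rewrite mulmxA mulmxKV // mulmxV.
    by rewrite -[LHS]mulmx1 -QX mulmxA mulVmx // mul1mx.
  by rewrite iQ cgE HS !mulmxA.
move=> l /eigenvalueP [v Hv v0].
pose u := v *m h.
have Hu : u *m U = l *: u.
  by rewrite /u HU !mulmxA mulmxK // Hv -scalemxAl.
have u0 : u != 0 by rewrite mulmx_free_eq0 ?row_free_unit.
clearbody u.
have E : (l * l^*) *: (u *m u^t*) = u *m u^t*.
  have := congr1 (fun x => x *m x^t*) Hu => /=.
  rewrite tcZZ tcM !mulmxA -[u *m U *m U^t*]mulmxA UUt mulmx1.
  by move=> <-.
have S0 : (u *m u^t*) 0 0 != 0.
  rewrite !mxE; apply: contra u0 => /eqP H; apply/eqP/matrixP => i j.
  rewrite ord1 mxE; apply/eqP; rewrite -normr_eq0 -sqrf_eq0 normCK.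
  have := @psumr_eq0P _ _ predT (fun k => u 0 k * (u^t*) k 0).
  move=> /(_ _ H j isT); rewrite !mxE => -> //.
  by move=> k _; rewrite !mxE -normCK exprn_ge0.
have : l * l^* = 1.
  have := congr1 (fun x : 'M[C]_1 => x 0 0) E => /=; rewrite mxE => /eqP.
  rewrite -{2}[(u *m u^t*) 0 0]mul1r -subr_eq0 -mulrBl mulf_eq0 (negbTE S0) orbF.
  by rewrite subr_eq0 => /eqP.
by rewrite -normCK => /eqP; rewrite pexpr_eq1 ?normr_ge0 // => /eqP.
Qed.

End Aux.

Theorem mainTheorem3 (R : realType) (n : nat) (g : 'M[R[i]%C]_n.+1) :
  (1 <= n)%N -> g \in unitmx ->
  elliptic g <->
  exists h : 'M[R[i]%C]_n.+1, h \in unitmx /\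
    forall r : R[i]%C, 0 < r -> preserves_T (invmx h *m g *m h) r.
Proof.
move=> _ gu; split; [exact: dir1 | exact: dir2].
Qed.
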